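(* Let $G_1$ and $G_2$ be two vertex-disjoint simple connected graphs with $|V(G_1)|=n_1$, $|V(G_2)|=n_2$, $|E(G_1)|=m_1$, $|E(G_2)|=m_2$. Then the edge R-join $G_1\underline{\vee}_R G_2$ satisfies \[ F(G_1\underline{\vee}_R G_2)=8F(G_1)+F(G_2)+3m_1M_1(G_2)+6m_1^{2}m_2+m_1(n_2+2)^3+n_2m_1^{3}. \]
   Context: For a simple graph $G$ and $v\in V(G)$, $d_G(v)$ is the degree of $v$. The first Zagreb index is $M_1(G)=\sum_{v\in V(G)}d_G(v)^2$ and the F-index is $F(G)=\sum_{v\in V(G)}d_G(v)^3$. The graph $R(G)$ is obtained from $G$ by inserting a new vertex into each edge of $G$ and joining each new vertex to the two end vertices of the corresponding edge (so the original edges of $G$ are kept); let $I(G)$ denote the set of these new vertices, so $V(R(G))=V(G)\cup I(G)$. The edge R-join $G_1\underline{\vee}_R G_2$ is the graph obtained from $R(G_1)$ and $G_2$ (taken vertex-disjoint) by joining each vertex of $I(G_1)$ to every vertex of $G_2$ by an edge. *)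

(* Defs.v *)
From mathcomp Require Import all_boot.
Set Implicit Arguments. Unset Strict Implicit. Unset Printing Implicit Defensive.

Definition simple_graph (T : finType) (e : rel T) : Prop :=
  symmetric e /\ irreflexive e.

Definition connected_graph (T : finType) (e : rel T) : Prop :=
  forall x y : T, connect e x y.

Definition deg (T : finType) (e : rel T) (v : T) : nat := #|[set w | e v w]|.

Definition M1 (T : finType) (e : rel T) : nat := \sum_(v : T) deg e v ^ 2.
Definition Findex (T : finType) (e : rel T) : nat := \sum_(v : T) deg e v ^ 3.

Definition edges (T : finType) (e : rel T) : {set {set T}} :=
  [set [set x; y] | x in T, y in T & e x y].

(* I(G): one new vertex per edge of G *)
Definition inserted (T : finType) (e : rel T) := {A : {set T} | A \in edges e}.

Definition Rjoin_vertex (T1 T2 : finType) (e1 : rel T1) :=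
  ((T1 + inserted e1) + T2)%type.
Arguments Rjoin_vertex {T1} T2 e1.

(* Adjacency of G1 edge-R-join G2:
   - R(G1): original edges of G1, plus each new vertex adjacent to the two
     ends of its edge;
   - G2: its own edges;
   - every new vertex in I(G1) adjacent to every vertex of G2. *)
Definition Rjoin_adj (T1 T2 : finType) (e1 : rel T1) (e2 : rel T2)
  (u v : Rjoin_vertex T2 e1) : bool :=
  match u, v with
  | inl (inl x), inl (inl y) => e1 x y
  | inl (inl x), inl (inr a) => x \in val a
  | inl (inr a), inl (inl x) => x \in val a
  | inl (inr _), inr _ => true
  | inr _, inl (inr _) => true
  | inr z, inr w => e2 z w
  | _, _ => false
  end.
Arguments Rjoin_adj {T1 T2} e1 e2 u v.

(* Main.v *)
Require Import Defs.
From mathcomp Require Import all_boot.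
From mathcomp Require Import zify.

Lemma card_sum (T : finType) (P : pred T) :
  #|[set w | P w]| = \sum_w (P w : nat).
Proof.
rewrite -sum1dep_card big_mkcond /=; apply: eq_bigr => w _; by case: (P w).
Qed.

Lemma sum_ins (T : finType) (e : rel T) (F : {set T} -> nat) :
  \sum_(a : inserted e) F (val a) = \sum_(A in edges e) F A.
Proof.
rewrite (reindex_omap (val : inserted e -> {set T}) insub); last first.
  by move=> i iA; case: insubP => [u _ <- //|]; rewrite iA.
apply: eq_bigl=> -[i iA]/=; rewrite iA /=.
case: insubP => [u _ Hu|]; last by rewrite iA.
by apply/esym/eqP; congr Some; apply: val_inj.
Qed.

Lemma in_edges (T : finType) (e : rel T) A :
  reflect (exists x y, e x y /\ A = [set x; y]) (A \in edges e).
Proof.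
apply: (iffP idP).
  by case/imset2P => x y _; rewrite inE => exy ->; exists x, y.
by case=> x [y [exy ->]]; apply: imset2_f; rewrite ?inE.
Qed.

Lemma deg_edges (T : finType) (e : rel T) v :
  simple_graph e -> \sum_(A in edges e) (v \in A : nat) = deg e v.
Proof.
case=> sym irr.
transitivity (\sum_(A in edges e | v \in A) 1).
  rewrite big_mkcondr /=; apply: eq_bigr => A _; by case: (v \in A).
rewrite sum1dep_card /deg.
have -> : [set x | (x \in edges e) && (v \in x)] =
          [set [set v; y] | y in [set w | e v w]].
  apply/setP => A; rewrite inE; apply/andP/imsetP.
    case=> /in_edges [x [y [exy ->]]] /set2P [] ->.
      exists y; first by rewrite inE. by [].
    exists x; first by rewrite inE sym. by rewrite setUC.
  case=> y; rewrite inE => evy ->; split; last exact: set21.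
  by apply/in_edges; exists v, y.
apply: card_in_imset => y y'; rewrite !inE => evy evy' H.
have : y \in [set v; y'] by rewrite -H; exact: set22.
case/set2P => // yv.
by move: evy; rewrite yv irr.
Qed.


Lemma card_edge (T : finType) (e : rel T) A :
  simple_graph e -> A \in edges e -> #|A| = 2.
Proof.
case=> sym irr /in_edges [x [y [exy ->]]]; rewrite cards2.
by case: eqP exy => // ->; rewrite irr.
Qed.

Lemma handshake (T : finType) (e : rel T) :
  simple_graph e -> \sum_v deg e v = 2 * #|edges e|.
Proof.
move=> sg.
under eq_bigr => v _ do rewrite -(deg_edges _ _ v sg).
rewrite exchange_big /=.
have E : forall A, A \in edges e -> \sum_i (i \in A : nat) = 2.
  move=> A HA; rewrite -(card_edge _ _ _ sg HA) -sum1_card [RHS]big_mkcond /=.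
  by apply: eq_bigr => z _; case: (z \in A).
by rewrite (eq_bigr (fun _ => 2) E) sum_nat_const mulnC.
Qed.

Theorem theorem4 (T1 T2 : finType) (e1 : rel T1) (e2 : rel T2) :
  simple_graph e1 -> simple_graph e2 ->
  connected_graph e1 -> connected_graph e2 ->
  let n2 := #|T2| in
  let m1 := #|edges e1| in
  let m2 := #|edges e2| in
  Findex (Rjoin_adj e1 e2) =
    8 * Findex e1 + Findex e2 + 3 * m1 * M1 e2 + 6 * m1 ^ 2 * m2
    + m1 * (n2 + 2) ^ 3 + n2 * m1 ^ 3.
Proof.
move=> sg1 sg2 _ _ n2 m1 m2.
have cardI : #|{: inserted e1}| = m1.
  by rewrite card_sig; apply: eq_card => A; rewrite inE.
have d1 x : deg (Rjoin_adj e1 e2) (inl (inl x)) = 2 * deg e1 x.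
  rewrite /deg card_sum !big_sumType /= [X in _ + X = _]big1 // addn0.
  rewrite -card_sum (sum_ins _ _ (fun A => (x \in A : nat))).
  by rewrite deg_edges // mul2n addnn.
have da a : deg (Rjoin_adj e1 e2) (inl (inr a)) = n2 + 2.
  rewrite /deg card_sum !big_sumType /= [X in _ + X + _ = _]big1 // addn0.
  rewrite -card_sum sum_nat_const muln1.
  have -> : [set w | w \in val a] = val a by apply/setP => w; rewrite inE.
  rewrite (card_edge _ _ _ sg1 (valP a)) addnC; congr (_ + _); exact: eq_card.
have d2 z : deg (Rjoin_adj e1 e2) (inr z) = m1 + deg e2 z.
  rewrite /deg card_sum !big_sumType /= [X in X + _ + _ = _]big1 // add0n.
  rewrite -card_sum sum_nat_const muln1 -cardI; congr (_ + _); exact: eq_card.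
rewrite /Findex !big_sumType /=.
under eq_bigr => x _ do rewrite d1 expnMn.
under [X in _ + X + _ = _]eq_bigr => a _ do rewrite da.
under [X in _ + X = _]eq_bigr => z _ do rewrite d2.
have H : forall z, (m1 + deg e2 z) ^ 3 =
   deg e2 z ^ 3 + 3 * m1 * deg e2 z ^ 2 + 3 * m1 ^ 2 * deg e2 z + m1 ^ 3.
  move=> z; set d := deg e2 z; rewrite !expnS !expn0; lia.
under [X in _ + X = _]eq_bigr => z _ do rewrite H.
rewrite -big_distrr /= sum_nat_const.
have -> : #|[pred a : inserted e1 | true]| = m1 by rewrite -cardI; exact: eq_card.
rewrite !big_split /= -!big_distrr /= (handshake _ _ sg2) sum_nat_const.
have -> : #|[pred z : T2 | true]| = n2 by exact: eq_card.
rewrite /M1 -/m2.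
set A := \sum_v _; set B := \sum_v _; set C := \sum_v _.
rewrite !expnS !expn0; lia.
Qed.
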